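(* Let $\nu\in\mathcal{P}_2(\mathbb{R}^2)$, $\gamma\in\Gamma(\nu)$, and $\mu$ the $x$-marginal of $\gamma$. For every $G\in\mathfrak{M}$, $$\gamma\big(\phi_G(y)-c(x,y)\,\big|\,x\big)\le\phi_G(x)\le0,\qquad\gamma\text{-a.s.},$$ and consequently $$\int\phi_G(y)\,d\nu-\int c(x,y)\,d\gamma\le\int\phi_G(x)\,d\mu\le0.$$
   Context: $c(x,y)=(x_1-y_1)(x_2-y_2)$ for $x,y\in\mathbb{R}^2$. $\mathcal{P}_2(\mathbb{R}^d)$: Borel probability measures with finite second moment. $\Gamma(\nu)$: the set of $\gamma\in\mathcal{P}_2(\mathbb{R}^2\times\mathbb{R}^2)$ (points $(x,y)$) with $y$-marginal $\nu$ and $\gamma(y|x)=x$. For a function $f$, $\gamma(f|x)$ denotes the conditional expectation of $f$ given the coordinate $x$ under $\gamma$. $\mathfrak{M}$: family of maximal monotone sets $G\subset\mathbb{R}^2$ (monotone: $c(r,s)\ge0$ for $r,s\in G$; maximal: not a proper subset of a monotone set). $\phi_G(y)=\inf_{x\in G}c(x,y)\in[-\infty,0]$. *)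

(* Defs.v *)
From HB Require Import structures.
From mathcomp Require Import all_boot all_order all_algebra.
From mathcomp Require Import all_classical all_reals all_analysis.
From mathcomp Require Import measurable_realfun.
Set Implicit Arguments. Unset Strict Implicit. Unset Printing Implicit Defensive.
Import Order.TTheory GRing.Theory Num.Theory.
Local Open Scope classical_set_scope.
Local Open Scope ring_scope.

(* Points of R^2 are pairs (x1, x2) : R * R, with the product (= Borel)
   sigma-algebra; couples (x, y) are elements of (R * R) * (R * R). *)

Definition cst {R : realType} (x y : R * R) : R := (x.1 - y.1) * (x.2 - y.2).

Definition monotone_set {R : realType} (G : set (R * R)) : Prop :=
  forall r s, G r -> G s -> 0 <= cst r s.

Definition maximal_monotone {R : realType} (G : set (R * R)) : Prop :=
  monotone_set G /\ forall H, monotone_set H -> G `<=` H -> H = G.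

Definition phiG {R : realType} (G : set (R * R)) (y : R * R) : \bar R :=
  ereal_inf [set (cst x y)%:E | x in G].

Definition P2_1 {R : realType} (nu : probability (R * R)%type R) : Prop :=
  nu.-integrable setT (fun y : R * R => (y.1 ^+ 2 + y.2 ^+ 2)%:E).

Definition P2_2 {R : realType} (g : probability ((R * R) * (R * R))%type R) : Prop :=
  g.-integrable setT
    (fun p : (R * R) * (R * R) =>
       (p.1.1 ^+ 2 + p.1.2 ^+ 2 + p.2.1 ^+ 2 + p.2.2 ^+ 2)%:E).

(* h is a version of the conditional expectation gamma(f | x), where x is the
   first coordinate of (x,y): h is Borel measurable on R^2 and
   int_{x in A} f d gamma = int_{x in A} h(x) d gamma for every Borel A. *)
Definition cond_exp_x {R : realType} (g : probability ((R * R) * (R * R))%type R)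
  (f : (R * R) * (R * R) -> \bar R) (h : R * R -> \bar R) : Prop :=
  measurable_fun [set: (R * R)%type] h /\
  forall A : set (R * R), measurable A ->
    (\int[g]_(p in A `*` setT) f p = \int[g]_(p in A `*` setT) h p.1)%E.

(* Gamma(nu): gamma in P_2, y-marginal nu, and gamma(y | x) = x *)
Definition in_Gamma {R : realType} (nu : probability (R * R)%type R)
  (g : probability ((R * R) * (R * R))%type R) : Prop :=
  P2_2 g /\
  (forall B : set (R * R), measurable B -> nu B = g (snd @^-1` B)) /\
  cond_exp_x g (fun p => (p.2.1)%:E) (fun x => (x.1)%:E) /\
  cond_exp_x g (fun p => (p.2.2)%:E) (fun x => (x.2)%:E).

Definition cpair {R : realType} (p : (R * R) * (R * R)) : \bar R :=
  (cst p.1 p.2)%:E.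

Definition phiG_minus_c {R : realType} (G : set (R * R))
  (p : (R * R) * (R * R)) : \bar R :=
  (phiG G p.2 - cpair p)%E.

(* Main.v *)
Require Import Defs.
From HB Require Import structures.
From mathcomp Require Import all_boot all_order all_algebra.
From mathcomp Require Import all_classical all_reals all_analysis.
From mathcomp Require Import measurable_realfun.
From mathcomp Require Import ring lra.
Import Order.TTheory GRing.Theory Num.Theory.
Local Open Scope classical_set_scope.
Local Open Scope ring_scope.
Local Notation cst2 := Defs.cst.
Lemma cstC (R : realType) (x y : R * R) : cst2 x y = cst2 y x.
Proof. by rewrite /Defs.cst; lra. Qed.

Lemma cst0 (R : realType) (x : R * R) : cst2 x x = 0.
Proof. by rewrite /Defs.cst subrr mul0r. Qed.

Lemma phiG_le0 (R : realType) (G : set (R * R)%type) :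
  maximal_monotone G -> forall x, (phiG G x <= 0)%E.
Proof.
move=> [mG maxG] x; rewrite leNgt; apply/negP => hx.
have Gc : forall z, G z -> 0 < cst2 z x.
  move=> z Gz; have : (phiG G x <= (cst2 z x)%:E)%E.
    by apply: ereal_inf_lbound; exists z.
  by move=> /(lt_le_trans hx); rewrite lte_fin.
have mH : monotone_set (G `|` [set x]).
  move=> r s [Gr|->] [Gs|->].
  - exact: mG.
  - exact/ltW/Gc.
  - rewrite cstC; exact/ltW/Gc.
  - by rewrite cst0.
have HG := maxG _ mH (@subsetUl _ G [set x]).
have Gx : G x by rewrite -HG; right.
by have := Gc x Gx; rewrite cst0 ltxx.
Qed.

Section dense.
Variables (R : realType) (G : set (R * R)%type) (z0 : R * R).
Hypothesis Gz0 : G z0.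

Definition box (q : rat * rat * nat) : set (R * R)%type :=
  [set z | G z /\ `|z.1 - ratr q.1.1| < (q.2.+1%:R)^-1 /\
                  `|z.2 - ratr q.1.2| < (q.2.+1%:R)^-1].

Definition dseq (n : nat) : R * R :=
  match unpickle n with Some q => xget z0 (box q) | None => z0 end.

Lemma dseqG n : G (dseq n).
Proof.
rewrite /dseq; case: (unpickle n) => [q|//].
have [[y hy]|h] := pselect (exists y, box q y).
  by have [] := xgetPex z0 (ex_intro _ _ hy).
by rewrite xgetPN // => y hy; apply: h; exists y.
Qed.

Lemma dseq_dense z : G z -> forall e : R, 0 < e ->
  exists n, `|(dseq n).1 - z.1| < e /\ `|(dseq n).2 - z.2| < e.
Proof.
move=> Gz e e0.
set k := Num.Def.trunc (2 / e).
have hk : 2 / e < k.+1%:R by exact: truncnS_gt.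
set r := (k.+1%:R : R)^-1.
have r0 : 0 < r by rewrite invr_gt0.
have r2 : 2 * r < e.
  rewrite /r ltr_pdivrMr //; rewrite ltr_pdivrMr // in hk; by rewrite mulrC.
have [q1 hq1] := @rat_in_itvoo R (z.1 - r) (z.1 + r) ltac:(lra).
have [q2 hq2] := @rat_in_itvoo R (z.2 - r) (z.2 + r) ltac:(lra).
move: hq1 hq2; rewrite !in_itv /= => /andP[a1 b1] /andP[a2 b2].
exists (pickle (q1, q2, k)).
have zb : box (q1, q2, k) z.
  split => //=; rewrite -/r. split; rewrite ltr_norml; apply/andP; split; lra.
rewrite /dseq pickleK; set w := xget z0 (box (q1, q2, k)).
have [_ /= [h1 h2]] : box (q1, q2, k) w := xgetPex z0 (ex_intro _ _ zb).
move: h1 h2; rewrite -/r !ltr_norml => /andP[c1 d1] /andP[c2 d2].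
by split; apply/andP; split; lra.
Qed.

Lemma cst_near (w z x : R * R) (eta : R) : 0 < eta -> eta <= 1 ->
  `|w.1 - z.1| < eta -> `|w.2 - z.2| < eta ->
  cst2 w x <= cst2 z x + eta * (`|z.1 - x.1| + `|z.2 - x.2| + 1).
Proof.
move=> e0 e1 h1 h2.
have -> : cst2 w x = cst2 z x + (z.1 - x.1) * (w.2 - z.2) + (w.1 - z.1) * (z.2 - x.2)
   + (w.1 - z.1) * (w.2 - z.2) by rewrite /Defs.cst; ring.
have t1 : (z.1 - x.1) * (w.2 - z.2) <= `|z.1 - x.1| * eta.
  apply: (le_trans (ler_norm _)); rewrite normrM; apply: ler_wpM2l => //; exact: ltW.
have t2 : (w.1 - z.1) * (z.2 - x.2) <= eta * `|z.2 - x.2|.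
  apply: (le_trans (ler_norm _)); rewrite normrM; apply: ler_wpM2r => //; exact: ltW.
have t3 : (w.1 - z.1) * (w.2 - z.2) <= eta.
  apply: (le_trans (ler_norm _)); rewrite normrM.
  apply: (le_trans (y := eta * 1)); last by rewrite mulr1.
  apply: ler_pM => //; apply: ltW => //; exact: (lt_le_trans h2).
have : 0 <= `|z.1 - x.1| by []. have : 0 <= `|z.2 - x.2| by [].
move: t1 t2 t3; set a := `|z.1 - x.1|; set b := `|z.2 - x.2|; nra.
Qed.

Lemma dseq_inf x a :
  (forall n, a <= (cst2 (dseq n) x)%:E)%E -> (a <= phiG G x)%E.
Proof.
move=> ha; apply/ereal_infP => _ [z Gz <-]; apply/lee_addgt0Pr => e e0; rewrite -/(e : R) in e0 *.
set M : R := `|z.1 - x.1| + `|z.2 - x.2| + 1.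
have M0 : 0 < M by rewrite /M ltr_pwDr.
set eta : R := Num.min 1 (e / M).
have eta0 : 0 < eta by rewrite lt_min ltr01 divr_gt0.
have eta1 : eta <= 1 by rewrite ge_min lexx.
have etaM : eta * M <= e.
  by rewrite -ler_pdivlMr // ge_min lexx orbT.
have [n [h1 h2]] := @dseq_dense z Gz eta eta0.
apply: (le_trans (ha n)); rewrite lee_fin.
apply: (le_trans (@cst_near _ _ x _ eta0 eta1 h1 h2)); rewrite -/M; lra.
Qed.

End dense.

Section general.
Context d (T : measurableType d) (R : realType).
Implicit Types (mu : measure T R) (f g : T -> \bar R).

Lemma le_int_meas mu D f g : measurable D ->
  measurable_fun D f -> measurable_fun D g ->
  (forall x, D x -> (f x <= g x)%E) ->
  (\int[mu]_(x in D) f x <= \int[mu]_(x in D) g x)%E.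
Proof.
move=> mD mf mg fg; rewrite (integralE _ _ f) (integralE _ _ g).
apply: leeB.
- apply: ge0_le_integral => //.
  + exact: measurable_funepos.
  + exact: measurable_funepos.
  + move=> x Dx; rewrite !funeposE.
    by rewrite ge_max !le_max (fg x Dx) lexx !orbT.
- apply: ge0_le_integral => //.
  + exact: measurable_funeneg.
  + exact: measurable_funeneg.
  + move=> x Dx; rewrite !funenegE.
    by rewrite ge_max !le_max leeN2 (fg x Dx) lexx !orbT.
Qed.

Lemma int_npos mu D f : (forall x, D x -> (f x <= 0)%E) ->
  (\int[mu]_(x in D) f x = - \int[mu]_(x in D) (- f x))%E.
Proof.
move=> f0; rewrite integralN ?oppeK //.
have -> : (\int[mu]_(x in D) f^\+ x = 0)%E.
  apply: integral0_eq => x Dx; rewrite !funeposE.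
  by apply/max_idPr; exact: f0.
by rewrite fin_num_adde_defr.
Qed.

End general.

Section limlemma.
Context d (T : measurableType d) (R : realType).

Lemma lim_int_le (mu : measure T R) (psi : nat -> T -> R) (phi : T -> \bar R)
    (a : \bar R) :
  (forall N, mu.-integrable setT (fun x => (psi N x)%:E)) ->
  (forall N x, psi N.+1 x <= psi N x) ->
  (forall x, (psi N x)%:E @[N --> \oo] --> phi x) ->
  (forall N, a <= \int[mu]_x (psi N x)%:E)%E ->
  (a <= \int[mu]_x phi x)%E.
Proof.
move=> ipsi dec cv ha.
have dec' x n m : (n <= m)%N -> psi m x <= psi n x.
  move=> /subnK <-; elim: (m - n)%N => [|k IH]; first by rewrite add0n.
  by rewrite addSn; exact: le_trans (dec _ _) IH.
have fin N : (\int[mu]_x (psi N x)%:E)%E \is a fin_num.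
  exact: integrable_fin_num.
case: a ha => [r| |] ha; last by rewrite leNye.
  2: by have := ha 0%N; rewrite leye_eq => /eqP h; move: (fin 0%N); rewrite h.
have mpsi N : measurable_fun setT (fun x => (psi N x)%:E).
  exact: measurable_int (ipsi N).
pose v N x := ((psi 0%N x)%:E - (psi N x)%:E)%E.
pose vinf x := ((psi 0%N x)%:E - phi x)%E.
have cvv x : v N x @[N --> \oo] --> vinf x.
  apply: cvgeB; first exact: fin_num_adde_defr.
    exact: cvg_cst.
  exact: cv.
have mv N : measurable_fun setT (v N) by apply: emeasurable_funB.
have mvinf : measurable_fun setT vinf.
  by apply: (emeasurable_fun_cvg v) => // x _; exact: cvv.
have v0 N x : (0 <= v N x)%E by rewrite /v -EFinB lee_fin subr_ge0 dec'.
have vnd x : {homo v^~ x : n m / (n <= m)%N >-> (n <= m)%E}.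
  by move=> n m nm; rewrite /v leeB // lee_fin dec'.
have vinf0 x : (0 <= vinf x)%E.
  rewrite -(cvg_lim _ (cvv x)) //; apply: lime_ge.
    by apply/cvg_ex; exists (vinf x); exact: cvv.
  by near=> N; exact: v0.
have intv N : (\int[mu]_x v N x = \int[mu]_x (psi 0%N x)%:E - \int[mu]_x (psi N x)%:E)%E.
  by rewrite integralB.
have mc : (\int[mu]_x vinf x = limn (fun N => \int[mu]_x v N x))%E.
  rewrite -monotone_convergence //.
  by apply: eq_integral => x _; rewrite (cvg_lim _ (cvv x)).
have bnd : (\int[mu]_x vinf x <= \int[mu]_x (psi 0%N x)%:E - r%:E)%E.
  rewrite mc; apply: lime_le.
    apply: ereal_nondecreasing_is_cvgn => n m nm.
    by apply: ge0_le_integral => // x _; exact: vnd.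
  by near=> N; rewrite intv; apply: leeB.
have ivinf : mu.-integrable setT vinf.
  apply/integrableP; split => //.
  under eq_integral => x _ do rewrite gee0_abs //.
  apply: (le_lt_trans bnd); rewrite ltey_eq fin_numB fin //.
have -> : (\int[mu]_x phi x = \int[mu]_x ((psi 0%N x)%:E - vinf x))%E.
  apply: eq_integral => x _; rewrite /vinf.
  by case: (phi x) => [s| |] /=; rewrite ?EFinB -?EFinD //; congr (_%:E); ring.
rewrite integralB //.
have finJ : (\int[mu]_x vinf x)%E \is a fin_num by exact: integrable_fin_num.
move: bnd; rewrite -(fineK (fin 0%N)) -(fineK finJ) -!EFinB !lee_fin.
lra.
Unshelve. all: by end_near.
Qed.

End limlemma.

Lemma absle1sq (R : realType) (y : R) : `|y| <= 1 + y ^+ 2.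
Proof.
rewrite -(real_normK (num_real y)); have := normr_ge0 y.
set t := `|y|; nra.
Qed.

Lemma arith_bnd (R : realType) (K a z u v w t : R) : 0 <= K -> 0 <= a -> 0 <= z ->
  0 <= u -> 0 <= v -> 0 <= w -> 0 <= t -> a <= K + u + v -> z <= w + t ->
  a * z <= 3 * K ^+ 2 + 3 * (u ^+ 2 + v ^+ 2) + 2 * (w ^+ 2 + t ^+ 2).
Proof.
move=> K0 a0 z0 u0 v0 w0 t0 ha hz.
have h1 : a * z <= (K + u + v) * (w + t).
  by apply: ler_pM.
have h2 : (K + u + v) * (w + t) <= (K + u + v) ^+ 2 + (w + t) ^+ 2.
  have := sqr_ge0 ((K + u + v) - (w + t)).
  have : 0 <= (K + u + v) * (w + t) by apply: mulr_ge0; lra.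
  set A := K + u + v; set C := w + t; nra.
have h3 : (K + u + v) ^+ 2 <= 3 * K ^+ 2 + 3 * (u ^+ 2 + v ^+ 2).
  have := sqr_ge0 (K - u); have := sqr_ge0 (K - v); have := sqr_ge0 (u - v); nra.
have h4 : (w + t) ^+ 2 <= 2 * (w ^+ 2 + t ^+ 2).
  have := sqr_ge0 (w - t); nra.
lra.
Qed.

Section main.
Variables (R : realType) (nu : probability (R * R)%type R)
  (g : probability ((R * R) * (R * R))%type R).
Hypothesis P2g : P2_2 g.
Hypothesis ceX1 : cond_exp_x g (fun p => (p.2.1)%:E) (fun x => (x.1)%:E).
Hypothesis ceX2 : cond_exp_x g (fun p => (p.2.2)%:E) (fun x => (x.2)%:E).

Local Notation T2 := (R * R)%type.
Local Notation Tp := ((R * R) * (R * R))%type.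

Definition coord (b : bool) (x : T2) : R := if b then x.1 else x.2.
Definition Zf b (p : Tp) : R := coord b p.2 - coord b p.1.
Definition Sq (p : Tp) : R := p.1.1 ^+ 2 + p.1.2 ^+ 2 + p.2.1 ^+ 2 + p.2.2 ^+ 2.

Lemma mcoord b : measurable_fun setT (coord b).
Proof. by case: b; [exact: measurable_fst | exact: measurable_snd]. Qed.

Lemma mcoord1 b : measurable_fun setT (fun p : Tp => coord b p.1).
Proof. exact: measurableT_comp (mcoord b) measurable_fst. Qed.

Lemma mcoord2 b : measurable_fun setT (fun p : Tp => coord b p.2).
Proof. exact: measurableT_comp (mcoord b) measurable_snd. Qed.

Lemma mZ b : measurable_fun setT (Zf b).
Proof. exact: measurable_funB (mcoord2 b) (mcoord1 b). Qed.

Lemma Sq_ge0 p : 0 <= Sq p.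
Proof. by rewrite /Sq !addr_ge0 // sqr_ge0. Qed.

Lemma intSq : g.-integrable setT (fun p => (Sq p)%:E).
Proof. exact: P2g. Qed.

Lemma int_bound (F : Tp -> R) (k c : R) : measurable_fun setT F ->
  (forall p, `|F p| <= k + c * Sq p) -> g.-integrable setT (fun p => (F p)%:E).
Proof.
move=> mF hF.
apply: (@le_integrable _ _ _ g setT measurableT (fun p => (F p)%:E)
  (fun p => ((fun _ => `|k|) p + `|c| * Sq p)%:E)).
- exact/measurable_EFinP.
- move=> p _; rewrite !abse_EFin lee_fin (@ger0_norm _ (_ + _)); last first.
    by rewrite addr_ge0 // mulr_ge0 // Sq_ge0.
  apply: (le_trans (hF p)); apply: lerD; first exact: ler_norm.
  by apply: ler_wpM2r; [exact: Sq_ge0 | exact: ler_norm].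
- under eq_fun do rewrite EFinD EFinM.
  apply: integrableD => //; first exact: finite_measure_integrable_cst.
  exact: integrableZl intSq.
Qed.

Lemma coord_bnd b (x : T2) : `|coord b x| ^+ 2 <= x.1 ^+ 2 + x.2 ^+ 2.
Proof.
rewrite real_normK ?num_real //; case: b => /=.
  by rewrite lerDl sqr_ge0.
by rewrite lerDr sqr_ge0.
Qed.

Lemma intcoord1 b : g.-integrable setT (fun p => (coord b p.1)%:E).
Proof.
apply: (@int_bound (fun p => coord b p.1) 1 1); first exact: mcoord1.
move=> p; apply: (le_trans (@absle1sq _ (coord b _))); rewrite mul1r lerD2l.
have := coord_bnd b p.1; rewrite real_normK ?num_real // /Sq.
have := sqr_ge0 p.2.1; have := sqr_ge0 p.2.2; lra.
Qed.

Lemma intcoord2 b : g.-integrable setT (fun p => (coord b p.2)%:E).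
Proof.
apply: (@int_bound (fun p => coord b p.2) 1 1); first exact: mcoord2.
move=> p; apply: (le_trans (@absle1sq _ (coord b _))); rewrite mul1r lerD2l.
have := coord_bnd b p.2; rewrite real_normK ?num_real // /Sq.
have := sqr_ge0 p.1.1; have := sqr_ge0 p.1.2; lra.
Qed.

Lemma ceZ b A : measurable A ->
  (\int[g]_(p in A `*` setT) (Zf b p)%:E = 0)%E.
Proof.
move=> mA.
have ce : cond_exp_x g (fun p => (coord b p.2)%:E) (fun x => (coord b x)%:E).
  by case: b.
have [_ h] := ce.
have mAT : measurable (A `*` (@setT T2)) by exact: measurableX.
have i1 := integrableS measurableT mAT (@subsetT _ _) (intcoord1 b).
have i2 := integrableS measurableT mAT (@subsetT _ _) (intcoord2 b).
rewrite (eq_integral (fun p => ((coord b p.2)%:E - (coord b p.1)%:E)%E)); last first.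
  by move=> p _; rewrite /Zf EFinB.
rewrite integralB // (h A mA) subee //.
exact: integrable_fin_num i1.
Qed.


Lemma intZ b : g.-integrable setT (fun p => (Zf b p)%:E).
Proof.
apply: (@int_bound (Zf b) 2 1); first exact: mZ.
move=> p; apply: (le_trans (ler_normB _ _)).
have h1 := @absle1sq _ (coord b p.2); have h2 := @absle1sq _ (coord b p.1).
have := coord_bnd b p.2; have := coord_bnd b p.1.
rewrite !real_normK ?num_real // /Sq.
have := sqr_ge0 p.1.1; have := sqr_ge0 p.1.2; have := sqr_ge0 p.2.1;
have := sqr_ge0 p.2.2; lra.
Qed.

Lemma intPZ b (psi : T2 -> R) (K : R) : 0 <= K -> measurable_fun setT psi ->
  (forall x, `|psi x| <= K + `|x.1| + `|x.2|) ->
  g.-integrable setT (fun p => (psi p.1 * Zf b p)%:E).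
Proof.
move=> K0 mpsi hpsi.
apply: (@int_bound (fun p => psi p.1 * Zf b p) (3 * K ^+ 2) 5).
  by apply: measurable_funM; [exact: measurableT_comp mpsi measurable_fst | exact: mZ].
move=> p; rewrite normrM.
have := @arith_bnd _ K `|psi p.1| `|Zf b p| `|p.1.1| `|p.1.2| `|coord b p.2|
  `|coord b p.1| K0 (normr_ge0 _) (normr_ge0 _) (normr_ge0 _) (normr_ge0 _)
  (normr_ge0 _) (normr_ge0 _) (hpsi _) (ler_normB _ _).
have := coord_bnd b p.2; have := coord_bnd b p.1.
rewrite !real_normK ?num_real // /Sq.
have := sqr_ge0 p.1.1; have := sqr_ge0 p.1.2; have := sqr_ge0 p.2.1;
have := sqr_ge0 p.2.2; lra.
Qed.

Lemma mart0 b (phi : T2 -> R) (K : R) : 0 <= K -> measurable_fun setT phi ->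
  (forall x, 0 <= phi x) -> (forall x, phi x <= K + `|x.1| + `|x.2|) ->
  (\int[g]_p (phi p.1 * Zf b p)%:E = 0)%E.
Proof.
move=> K0 mphi phi0 phiK.
have bphi x : `|phi x| <= K + `|x.1| + `|x.2| by rewrite ger0_norm.
have iI := @intPZ b phi K K0 mphi bphi.
have finI := integrable_fin_num measurableT iI.
have iaZ : g.-integrable setT (fun p => (`|Zf b p|)%:E).
  exact: integrable_abse (intZ b).
have finC := integrable_fin_num measurableT iaZ.
have C0 : 0 <= fine (\int[g]_p (`|Zf b p|)%:E)%E.
  by rewrite fine_ge0 // integral_ge0.
set I := (\int[g]_p (phi p.1 * Zf b p)%:E)%E in finI *.
set C := fine (\int[g]_p (`|Zf b p|)%:E)%E in C0.
have key m : `|fine I| <= (m.+1%:R)^-1 * C.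
  set m1 : R := m.+1%:R.
  have m10 : 0 < m1 by rewrite /m1 ltr0n.
  pose tr x := Num.Def.trunc (m1 * phi x).
  pose fl x : R := (tr x)%:R / m1.
  have hpm x : 0 <= m1 * phi x by rewrite mulr_ge0 // ltW.
  have trI x : (tr x)%:R <= m1 * phi x < (tr x).+1%:R := truncn_itv (hpm x).
  have fl0 x : 0 <= fl x by rewrite /fl divr_ge0 // ltW.
  have flphi x : fl x <= phi x.
    by rewrite /fl ler_pdivrMr // mulrC; case/andP: (trI x).
  have phifl x : phi x - fl x <= m1^-1.
    have h : m1 * phi x <= (tr x)%:R + 1.
      by case/andP: (trI x) => _ /ltW; rewrite -natr1.
    have : phi x <= ((tr x)%:R + 1) / m1 by rewrite ler_pdivlMr // mulrC.
    by rewrite /fl lerBlDr mulrDl mul1r addrC.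
  pose B n := [set x | tr x = n].
  have mB n : measurable (B n).
    have -> : B n = setT `&` ((fun x => m1 * phi x) @^-1` `[n%:R, n.+1%:R[).
      apply/seteqP; split => x /=.
        move=> <-; split => //; rewrite in_itv /=; exact: trI.
      move=> [_]; rewrite in_itv /= => /andP[h1 h2].
      apply/eqP; rewrite eqn_leq; apply/andP; split.
        by rewrite -ltnS truncn_lt_nat.
      by rewrite truncn_ge_nat.
    apply: (measurable_funM (measurable_cst _) mphi) => //; exact: measurable_itv.
  have mfl : measurable_fun setT fl.
    move=> _ Y mY; rewrite setTI.
    have -> : fl @^-1` Y = \bigcup_(n in [set n | Y (n%:R / m1)]) B n.
      apply/seteqP; split => x /=.
        by move=> Yx; exists (tr x).
      by move=> [n /= Yn Bn]; rewrite /fl Bn.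
    by apply: bigcup_measurable => n _; exact: mB.
  have i1 : g.-integrable setT (fun p => ((phi p.1 - fl p.1) * Zf b p)%:E).
    apply: (@intPZ b (fun x => phi x - fl x) K K0); first exact: measurable_funB.
    move=> x; rewrite ger0_norm ?subr_ge0 //.
    by apply: le_trans (phiK x); rewrite lerBlDr lerDl.
  have i2 : g.-integrable setT (fun p => (fl p.1 * Zf b p)%:E).
    apply: (@intPZ b fl K K0 mfl) => x; rewrite ger0_norm //.
    exact: le_trans (flphi x) (phiK x).
  have zero : (\int[g]_p (fl p.1 * Zf b p)%:E = 0)%E.
    have eqT : [set: Tp] = \bigcup_n (B n `*` [set: T2]).
      by apply/seteqP; split => p // _; exists (tr p.1).
    rewrite eqT integral_bigcup //; last 3 first.
    - move=> i j _ _ [p [[/= Bi _] [/= Bj _]]]; by rewrite -Bi -Bj.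
    - by move=> n; apply: measurableX.
    - by rewrite -eqT.
    apply: eseries0 => n _ _.
    have mBT : measurable (B n `*` [set: T2]) by apply: measurableX.
    rewrite (eq_integral (fun p => ((n%:R / m1)%:E * (Zf b p)%:E)%E)); last first.
      by move=> p /[!inE] -[/= Bp _]; rewrite /fl Bp EFinM.
    rewrite integralZl //; last exact: integrableS measurableT mBT (@subsetT _ _) (intZ b).
    by rewrite ceZ ?mule0.
  have -> : I = (\int[g]_p ((phi p.1 - fl p.1) * Zf b p)%:E)%E.
    rewrite /I -[X in (_ = X)%E]adde0 -zero -integralD //.
    by apply: eq_integral => p _; rewrite -EFinD; congr (_%:E); ring.
  have habs := le_abse_integral g measurableT (measurable_int _ i1).
  have hle : (\int[g]_p `|((phi p.1 - fl p.1) * Zf b p)%:E| <=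
              \int[g]_p ((m1^-1)%:E * (`|Zf b p|)%:E))%E.
    apply: ge0_le_integral => //.
    - apply: measurableT_comp => //; exact: measurable_int i1.
    - by apply: emeasurable_funM => //; exact: measurable_int iaZ.
    - move=> p _; rewrite abse_EFin -EFinM lee_fin normrM.
      apply: ler_wpM2r => //; rewrite ger0_norm ?subr_ge0 //.
  rewrite integralZl // in hle.
  have := le_trans habs hle.
  rewrite -(fineK (integrable_fin_num measurableT i1)) abse_EFin -/C.
  rewrite -[X in (_ * X)%E](fineK finC) -EFinM lee_fin.
  by rewrite /I (fineK (integrable_fin_num measurableT i1)).
rewrite -(fineK finI); congr (_%:E).
apply/eqP; rewrite -normr_eq0 eq_le normr_ge0 andbT leNgt; apply/negP => hr.
set r := `|fine I| in hr key.
have hm : C / r < (Num.Def.trunc (C / r)).+1%:R := truncnS_gt _.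
have := key (Num.Def.trunc (C / r)).
set M := (Num.Def.trunc (C / r)).+1%:R in hm *.
have M0 : 0 < M by rewrite /M ltr0n.
rewrite ltr_pdivrMr // in hm.
move=> h; have := ler_wpM2l (ltW M0) h.
rewrite mulrA mulfV ?gt_eqF // mul1r => h2.
by move: (lt_le_trans hm h2); rewrite ltxx.
Qed.


Lemma mart b (phi : T2 -> R) (K : R) : 0 <= K -> measurable_fun setT phi ->
  (forall x, `|phi x| <= K + `|x.1| + `|x.2|) ->
  (\int[g]_p (phi p.1 * Zf b p)%:E = 0)%E.
Proof.
move=> K0 mphi hK.
pose pp x := (`|phi x| + phi x) / 2.
pose pn x := (`|phi x| - phi x) / 2.
have ep x : phi x = pp x - pn x by rewrite /pp /pn; field.
have mabs : measurable_fun setT (fun x => `|phi x|).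
  by apply: measurableT_comp; [exact: normr_measurable | exact: mphi].
have mpp : measurable_fun setT pp.
  by apply: measurable_funM => //; apply: measurable_funD.
have mpn : measurable_fun setT pn.
  by apply: measurable_funM => //; apply: measurable_funB.
have nb x : - `|phi x| <= phi x <= `|phi x|.
  by rewrite -ler_norml.
have pp0 x : 0 <= pp x by rewrite /pp; have := nb x; lra.
have pn0 x : 0 <= pn x by rewrite /pn; have := nb x; lra.
have ppK x : pp x <= K + `|x.1| + `|x.2|.
  by apply: le_trans (hK x); rewrite /pp; have := nb x; lra.
have pnK x : pn x <= K + `|x.1| + `|x.2|.
  by apply: le_trans (hK x); rewrite /pn; have := nb x; lra.
have bp x : `|pp x| <= K + `|x.1| + `|x.2| by rewrite ger0_norm.
have bn x : `|pn x| <= K + `|x.1| + `|x.2| by rewrite ger0_norm.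
rewrite (eq_integral (fun p => (pp p.1 * Zf b p)%:E - (pn p.1 * Zf b p)%:E)%E); last first.
  by move=> p _; rewrite -EFinB -mulrBl -ep.
rewrite integralB //; last 2 first.
- exact: (@intPZ b pp K K0 mpp bp).
- exact: (@intPZ b pn K K0 mpn bn).
by rewrite (@mart0 b pp K) // (@mart0 b pn K) // subee.
Qed.

Lemma mart_set b (phi : T2 -> R) (K : R) A : measurable A -> 0 <= K ->
  measurable_fun setT phi ->
  (forall x, `|phi x| <= K + `|x.1| + `|x.2|) ->
  (\int[g]_(p in A `*` setT) (phi p.1 * Zf b p)%:E = 0)%E.
Proof.
move=> mA K0 mphi hK.
pose phA x := phi x * \1_A x.
rewrite integral_mkcond (eq_integral (fun p => (phA p.1 * Zf b p)%:E)); last first.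
  move=> p _; rewrite patchE /phA indicE.
  have [Ap|nAp] := pselect (A p.1).
    by rewrite (mem_set Ap) mulr1 ifT //; apply/mem_set; split.
  rewrite (memNset nAp) mulr0 mul0r ifF //; apply/negP; rewrite inE.
  by move=> [].
apply: (@mart b phA K K0).
  by rewrite /phA; apply: measurable_funM => //; exact: measurable_indic.
move=> x; rewrite /phA indicE; case: (x \in A).
  by rewrite mulr1.
by rewrite mulr0 normr0; apply: addr_ge0 => //; apply: addr_ge0.
Qed.


Variable G : set T2.
Hypothesis maxG : maximal_monotone G.

Lemma Gne : exists z, G z.
Proof.
apply/not_existsP => nG; have := @phiG_le0 R G maxG (0, 0); rewrite /phiG.
have -> : [set (cst2 x (0, 0))%:E | x in G] = set0.
  by apply/seteqP; split => // y [x Gx _]; apply: (nG x).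
by rewrite ereal_inf0.
Qed.

Definition z0 : T2 := xget (0, 0) G.
Lemma Gz0 : G z0. Proof. exact: xgetPex Gne. Qed.

Definition dd := @dseq R G z0.
Lemma ddG n : G (dd n). Proof. exact: (@dseqG R G z0 Gz0). Qed.
Lemma dd_inf x a : (forall n, a <= (cst2 (dd n) x)%:E)%E -> (a <= phiG G x)%E.
Proof. by move=> h; exact: (@dseq_inf R G z0 x a h). Qed.

Lemma phiG_le_cst z x : G z -> (phiG G x <= (cst2 z x)%:E)%E.
Proof. by move=> Gz; apply: ereal_inf_lbound; exists z. Qed.

Fixpoint sel (N : nat) (x : T2) : T2 :=
  match N with
  | 0%N => dd 0%N
  | N'.+1 => if cst2 (dd N'.+1) x < cst2 (sel N' x) x then dd N'.+1 else sel N' x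
  end.

Definition psi N x := cst2 (sel N x) x.

Fixpoint Kb (N : nat) : R :=
  match N with
  | 0%N => `|(dd 0%N).1| + `|(dd 0%N).2|
  | N'.+1 => Kb N' + `|(dd N'.+1).1| + `|(dd N'.+1).2|
  end.

Lemma Kb_ge0 N : 0 <= Kb N.
Proof. by elim: N => [|N IH] /=; rewrite ?addr_ge0. Qed.

Lemma sel_bnd N x : `|(sel N x).1| + `|(sel N x).2| <= Kb N.
Proof.
elim: N => [//|N IH] /=.
case: ifP => _.
  by rewrite -addrA lerDr Kb_ge0.
by apply: (le_trans IH); rewrite -addrA lerDl addr_ge0.
Qed.

Lemma selG N x : G (sel N x).
Proof. by elim: N => [|N IH] /=; [exact: ddG | case: ifP => _ //; exact: ddG]. Qed.

Lemma psi_dec N x : psi N.+1 x <= psi N x.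
Proof. by rewrite /psi /=; case: ifPn => [/ltW //|]. Qed.

Lemma psi_le_dd N x : psi N x <= cst2 (dd N) x.
Proof.
case: N => [|N] //=; rewrite /psi /=; case: ifPn => // .
by rewrite -leNgt.
Qed.

Lemma mcst_comp (s : T2 -> T2) : measurable_fun setT s ->
  measurable_fun setT (fun x => cst2 (s x) x).
Proof.
move=> ms; apply: measurable_funM; apply: measurable_funB.
- exact: measurableT_comp measurable_fst ms.
- exact: measurable_fst.
- exact: measurableT_comp measurable_snd ms.
- exact: measurable_snd.
Qed.

Lemma msel N : measurable_fun setT (sel N).
Proof.
elim: N => [|N IH]; first exact: (measurable_cst (dd 0%N)).
change (measurable_fun setT (fun x => if cst2 (dd N.+1) x < cst2 (sel N x) x
  then dd N.+1 else sel N x)).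
apply: measurable_fun_ifT.
- apply: measurable_fun_ltr; first exact: (@mcst_comp (fun _ => dd N.+1) (measurable_cst _)).
  exact: mcst_comp.
- exact: (measurable_cst (dd N.+1)).
- exact: IH.
Qed.

Lemma mpsi N : measurable_fun setT (psi N).
Proof. exact: mcst_comp (msel N). Qed.

Lemma psi_cvg x : (fun N => (psi N x)%:E) @ \oo --> phiG G x.
Proof.
have nd : {homo (fun N => (psi N x)%:E) : n m / (n <= m)%N >-> (m <= n)%E}.
  apply/nonincreasing_seqP => n; rewrite lee_fin; exact: psi_dec.
suff <- : ereal_inf (range (fun N => (psi N x)%:E)) = phiG G x.
  exact: ereal_nonincreasing_cvgn.
apply/le_anti/andP; split.
  apply: dd_inf => n; apply: (le_trans (ereal_inf_lbound _)).
    by exists n.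
  by rewrite lee_fin psi_le_dd.
by apply/ereal_infP => _ [N _ <-]; apply: phiG_le_cst; exact: selG.
Qed.

Lemma mphiG : measurable_fun setT (phiG G).
Proof.
apply: (emeasurable_fun_cvg (fun N x => (psi N x)%:E)).
  by move=> N; apply/measurable_EFinP; exact: mpsi.
by move=> x _; exact: psi_cvg.
Qed.


Lemma mcst2 (s t : Tp -> T2) : measurable_fun setT s -> measurable_fun setT t ->
  measurable_fun setT (fun p => cst2 (s p) (t p)).
Proof.
move=> ms mt; apply: measurable_funM; apply: measurable_funB.
- exact: measurableT_comp measurable_fst ms.
- exact: measurableT_comp measurable_fst mt.
- exact: measurableT_comp measurable_snd ms.
- exact: measurableT_comp measurable_snd mt.
Qed.

Lemma cst_bnd (u v : T2) (K : R) : 0 <= K -> `|u.1| + `|u.2| <= K ->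
  `|cst2 u v| <= 5 * K ^+ 2 + 5 * (v.1 ^+ 2 + v.2 ^+ 2).
Proof.
move=> K0 hu; rewrite /Defs.cst normrM.
have a1 : `|u.1 - v.1| <= K + `|v.1| + `|v.2|.
  apply: (le_trans (ler_normB _ _)); have := normr_ge0 u.2; have := normr_ge0 v.2.
  lra.
have a2 : `|u.2 - v.2| <= K + `|v.2|.
  apply: (le_trans (ler_normB _ _)); have := normr_ge0 u.1; lra.
have := @arith_bnd _ K _ _ `|v.1| `|v.2| K `|v.2| K0 (normr_ge0 _) (normr_ge0 _)
  (normr_ge0 _) (normr_ge0 _) K0 (normr_ge0 _) a1 a2.
rewrite !real_normK ?num_real //.
have := sqr_ge0 v.1; have := sqr_ge0 v.2; have := sqr_ge0 K; lra.
Qed.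

Lemma intF N : g.-integrable setT (fun p => (cst2 (sel N p.1) p.2)%:E).
Proof.
apply: (@int_bound _ (5 * Kb N ^+ 2) 5).
  apply: mcst2; [exact: measurableT_comp (msel N) measurable_fst | exact: measurable_snd].
move=> p; apply: (le_trans (@cst_bnd _ p.2 _ (Kb_ge0 N) (sel_bnd N p.1))).
rewrite lerD2l ler_pM2l // /Sq.
have := sqr_ge0 p.1.1; have := sqr_ge0 p.1.2; lra.
Qed.

Lemma intpsi N : g.-integrable setT (fun p => (psi N p.1)%:E).
Proof.
apply: (@int_bound _ (5 * Kb N ^+ 2) 5).
  exact: measurableT_comp (mpsi N) measurable_fst.
move=> p; apply: (le_trans (@cst_bnd _ p.1 _ (Kb_ge0 N) (sel_bnd N p.1))).
rewrite lerD2l ler_pM2l // /Sq.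
have := sqr_ge0 p.2.1; have := sqr_ge0 p.2.2; lra.
Qed.

Lemma intd n : g.-integrable setT (fun p => (cst2 (dd n) p.1)%:E).
Proof.
have K0 : 0 <= `|(dd n).1| + `|(dd n).2| by rewrite addr_ge0.
apply: (@int_bound _ (5 * (`|(dd n).1| + `|(dd n).2|) ^+ 2) 5).
  apply: mcst2; [exact: measurable_cst | exact: measurable_fst].
move=> p; apply: (le_trans (@cst_bnd (dd n) p.1 _ K0 (lexx _))).
rewrite lerD2l ler_pM2l // /Sq.
have := sqr_ge0 p.2.1; have := sqr_ge0 p.2.2; lra.
Qed.

Lemma intc : g.-integrable setT (@cpair R).
Proof.
apply: (@int_bound (fun p => cst2 p.1 p.2) 0 3).
  by apply: mcst2; [exact: measurable_fst | exact: measurable_snd].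
move=> p; rewrite /Defs.cst normrM.
have a1 : `|p.1.1 - p.2.1| <= 0 + `|p.1.1| + `|p.2.1|.
  by rewrite add0r; exact: ler_normB.
have a2 : `|p.1.2 - p.2.2| <= `|p.1.2| + `|p.2.2| by exact: ler_normB.
have := @arith_bnd _ 0 _ _ _ _ _ _ (lexx 0) (normr_ge0 _) (normr_ge0 _)
  (normr_ge0 _) (normr_ge0 _) (normr_ge0 _) (normr_ge0 _) a1 a2.
rewrite !real_normK ?num_real // /Sq.
have := sqr_ge0 p.1.2; have := sqr_ge0 p.2.2; lra.
Qed.

Lemma claimA N : (\int[g]_p (cst2 (sel N p.1) p.2)%:E - \int[g]_p cpair p =
  \int[g]_p (psi N p.1)%:E)%E.
Proof.
pose f1 x := x.1 - (sel N x).1.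
pose f2 x := x.2 - (sel N x).2.
have b1 x : `|f1 x| <= Kb N + `|x.1| + `|x.2|.
  apply: (le_trans (ler_normB _ _)); have := sel_bnd N x.
  have := normr_ge0 (sel N x).2; have := normr_ge0 x.2; lra.
have b2 x : `|f2 x| <= Kb N + `|x.1| + `|x.2|.
  apply: (le_trans (ler_normB _ _)); have := sel_bnd N x.
  have := normr_ge0 (sel N x).1; have := normr_ge0 x.1; lra.
have m1 : measurable_fun setT f1.
  apply: measurable_funB; [exact: measurable_fst|].
  exact: measurableT_comp measurable_fst (msel N).
have m2 : measurable_fun setT f2.
  apply: measurable_funB; [exact: measurable_snd|].
  exact: measurableT_comp measurable_snd (msel N).
have i1 := @intPZ false f1 _ (Kb_ge0 N) m1 b1.
have i2 := @intPZ true f2 _ (Kb_ge0 N) m2 b2.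
rewrite -integralB //; last exact: intc; last exact: intF.
rewrite (eq_integral (fun p => (psi N p.1)%:E +
   ((f1 p.1 * Zf false p)%:E + (f2 p.1 * Zf true p)%:E))%E); last first.
  move=> p _ /=; rewrite /cpair -EFinB -!EFinD; congr (_%:E).
  by rewrite /psi /f1 /f2 /Zf /coord /Defs.cst /=; ring.
rewrite integralD //; last 2 first.
- exact: intpsi.
- exact: integrableD.
rewrite integralD // (@mart false f1 (Kb N)) ?(@mart true f2 (Kb N)) ?Kb_ge0 //.
by rewrite !adde0.
Qed.


Lemma PF (m : probability T2 R) (f : Tp -> T2) : measurable_fun setT f ->
  (forall B, measurable B -> m B = g (f @^-1` B)) ->
  (\int[m]_x phiG G x = \int[g]_p phiG G (f p))%E.
Proof.
move=> mf hm.
have le0 := @phiG_le0 R G maxG.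
rewrite (@int_npos _ _ _ m setT (phiG G)); last by move=> x _; exact: le0.
rewrite (@int_npos _ _ _ g setT (fun p => phiG G (f p))); last by move=> x _; exact: le0.
congr (- _)%E.
rewrite (eq_measure_integral (pushforward g f)); last by move=> A mA _; exact: hm.
rewrite ge0_integral_pushforward //.
- exact: (measurableT_comp (@oppe_measurable R setT) mphiG).
- by move=> x _; rewrite oppe_ge0; exact: le0.
Qed.

Lemma part2 (nu' mu : probability T2 R) :
  (forall B, measurable B -> nu' B = g (snd @^-1` B)) ->
  (forall A, measurable A -> mu A = g (fst @^-1` A)) ->
  (\int[nu']_y phiG G y - \int[g]_p cpair p <= \int[mu]_x phiG G x)%E.
Proof.
move=> hnu hmu.
rewrite (PF nu' snd measurable_snd hnu) (PF mu fst measurable_fst hmu).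
apply: (@lim_int_le _ _ _ g (fun N p => psi N p.1)).
- exact: intpsi.
- by move=> N p; exact: psi_dec.
- by move=> p; exact: psi_cvg.
move=> N; rewrite -claimA; apply: leeB => //.
apply: le_int_meas => //.
- exact: measurableT_comp mphiG measurable_snd.
- exact: measurable_int (intF N).
- by move=> p _; apply: phiG_le_cst; exact: selG.
Qed.

Lemma part1 h : cond_exp_x g (phiG_minus_c G) h ->
  {ae g, forall p : Tp, (h p.1 <= phiG G p.1 <= 0)%E}.
Proof.
move=> [mh hint].
have mh1 : measurable_fun setT (fun p : Tp => h p.1).
  exact: measurableT_comp mh measurable_fst.
have step n A : measurable A ->
    (\int[g]_(p in A `*` setT) h p.1 <= \int[g]_(p in A `*` setT) (cst2 (dd n) p.1)%:E)%E.
  move=> mA; have mAT : measurable (A `*` (@setT T2)) by exact: measurableX.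
  rewrite -(hint A mA).
  pose f1 (x : T2) := x.1 - (dd n).1.
  pose f2 (x : T2) := x.2 - (dd n).2.
  set K := `|(dd n).1| + `|(dd n).2|.
  have K0 : 0 <= K by rewrite addr_ge0.
  have b1 x : `|f1 x| <= K + `|x.1| + `|x.2|.
    apply: (le_trans (ler_normB _ _)); rewrite /K.
    have := normr_ge0 (dd n).2; have := normr_ge0 x.2; lra.
  have b2 x : `|f2 x| <= K + `|x.1| + `|x.2|.
    apply: (le_trans (ler_normB _ _)); rewrite /K.
    have := normr_ge0 (dd n).1; have := normr_ge0 x.1; lra.
  have m1 : measurable_fun setT f1.
    by apply: measurable_funB; [exact: measurable_fst | exact: measurable_cst].
  have m2 : measurable_fun setT f2.
    by apply: measurable_funB; [exact: measurable_snd | exact: measurable_cst].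
  have iS (F : Tp -> \bar R) : g.-integrable setT F -> g.-integrable (A `*` setT) F.
    exact: integrableS measurableT mAT (@subsetT _ _).
  apply: (@le_trans _ _ (\int[g]_(p in A `*` setT)
     ((cst2 (dd n) p.1)%:E + ((f1 p.1 * Zf false p)%:E + (f2 p.1 * Zf true p)%:E)))%E).
    apply: le_int_meas => //.
    - apply: measurable_funTS; apply: emeasurable_funB.
        exact: measurableT_comp mphiG measurable_snd.
      exact: measurable_int intc.
    - apply: measurable_funTS; apply: emeasurable_funD.
        exact: measurable_int (intd n).
      apply: emeasurable_funD.
        exact: measurable_int (@intPZ false f1 _ K0 m1 b1).
      exact: measurable_int (@intPZ true f2 _ K0 m2 b2).
    - move=> p _; rewrite /phiG_minus_c -!EFinD.
      apply: (@le_trans _ _ ((cst2 (dd n) p.2)%:E - cpair p)%E).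
        by apply: leeB => //; apply: phiG_le_cst; exact: ddG.
      rewrite /cpair -EFinB lee_fin le_eqVlt; apply/orP; left; apply/eqP.
      by rewrite /f1 /f2 /Zf /coord /Defs.cst /=; ring.
  rewrite integralD //; last 2 first.
  - exact: iS (intd n).
  - exact: (integrableD mAT (iS _ (@intPZ false f1 _ K0 m1 b1))
                             (iS _ (@intPZ true f2 _ K0 m2 b2))).
  rewrite integralD //; last 2 first.
  - exact: (iS _ (@intPZ false f1 _ K0 m1 b1)).
  - exact: (iS _ (@intPZ true f2 _ K0 m2 b2)).
  by rewrite (@mart_set false f1 K) // (@mart_set true f2 K) // !adde0.
have aen n : \forall p \ae g, (h p.1 <= (cst2 (dd n) p.1)%:E)%E.
  pose Ak k := [set x : T2 | ((cst2 (dd n) x + (k.+1%:R)^-1)%:E < h x)%E].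
  have mAk k : measurable (Ak k).
    rewrite -[Ak k]setTI; apply: measurable_lte => //.
    apply/measurable_EFinP; apply: measurable_funD => //.
    exact: (@mcst_comp (fun _ => dd n) (measurable_cst _)).
  have negk k : g.-negligible (Ak k `*` (@setT T2)).
    pose B : set Tp := Ak k `*` setT.
    have mB : measurable B by exact: measurableX.
    exists B; split => //.
    set e : R := (k.+1%:R)^-1.
    have e0 : 0 < e by rewrite invr_gt0.
    have ic : g.-integrable B (fun p => (cst2 (dd n) p.1)%:E).
      exact: integrableS measurableT mB (@subsetT _ _) (intd n).
    have i1 : (\int[g]_(p in B) ((cst2 (dd n) p.1)%:E + e%:E) <=
               \int[g]_(p in B) h p.1)%E.
      apply: le_int_meas => //.
      - apply: measurable_funTS; apply/measurable_EFinP; apply: measurable_funD => //.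
        by apply/measurable_EFinP; exact: measurable_int (intd n).
      - exact: measurable_funTS.
      - by move=> p [/= Ap _]; rewrite -EFinD; exact: ltW.
    have st : (\int[g]_(p in B) h p.1 <= \int[g]_(p in B) (cst2 (dd n) p.1)%:E)%E.
      exact: step n (Ak k) (mAk k).
    have := le_trans i1 st.
    rewrite integralD //; last exact: finite_measure_integrable_cst.
    rewrite integral_cst //.
    have fc := integrable_fin_num mB ic.
    have fg : g B \is a fin_num by exact: fin_num_measure.
    rewrite -[X in (_ <= X)%E]adde0 leeD2lE // pmule_rle0 ?lte_fin // => hle.
    by apply/le_anti; rewrite hle measure_ge0.
  apply: (@negligibleS _ _ _ g (\bigcup_k (Ak k `*` setT))); last first.
    exact: negligible_bigcup.
  move=> p /= /negP; rewrite -ltNge => hp.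
  move: hp; case E : (h p.1) => [r| |] hp.
  - rewrite lte_fin in hp.
    have rp : 0 < r - cst2 (dd n) p.1 by rewrite subr_gt0.
    set t := r - cst2 (dd n) p.1 in rp.
    have h1 := truncnS_gt (t^-1).
    set M := (Num.Def.trunc t^-1).+1%:R in h1.
    have M0 : 0 < M by rewrite /M ltr0n.
    have A : t * t^-1 = 1 by rewrite mulfV ?gt_eqF.
    have B : M * M^-1 = 1 by rewrite mulfV ?gt_eqF.
    have C : 0 < M^-1 by rewrite invr_gt0.
    have D : 0 < t^-1 by rewrite invr_gt0.
    have hM : M^-1 < t by rewrite -[X in _ < X]invrK ltf_pV2 ?posrE ?invr_gt0.
    exists (Num.Def.trunc t^-1) => //; split => //=.
    by rewrite /Ak /= E lte_fin -ltrBrDl.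
  - by exists 0%N => //; split => //=; rewrite /Ak /= E ltry.
  - by rewrite ltNge leNye in hp.
have := ae_foralln aen; apply: filterS => p hp.
apply/andP; split; last exact: phiG_le0.
exact: dd_inf.
Qed.

End main.

Theorem lemma7 (R : realType) (nu : probability (R * R)%type R)
  (g : probability ((R * R) * (R * R))%type R)
  (mu : probability (R * R)%type R) (G : set (R * R)) :
  P2_1 nu -> in_Gamma nu g ->
  (forall A : set (R * R), measurable A -> mu A = g (fst @^-1` A)) ->
  maximal_monotone G ->
  (forall h : R * R -> \bar R,
     cond_exp_x g (phiG_minus_c G) h ->
     {ae g, forall p : (R * R) * (R * R), (h p.1 <= phiG G p.1 <= 0)%E}) /\
  ((\int[nu]_y phiG G y - \int[g]_p cpair p <= \int[mu]_x phiG G x) /\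
   \int[mu]_x phiG G x <= 0)%E.
Proof.
move=> _ [P2g [hnu [ce1 ce2]]] hmu maxG.
split; first by move=> h hc; exact: (part1 _ _ P2g ce1 ce2 _ maxG _ hc).
split; first exact: (part2 _ _ P2g ce1 ce2 _ maxG _ _ hnu hmu).
rewrite (@int_npos _ _ _ mu setT (phiG G)); last by move=> x _; exact: phiG_le0.
rewrite oppe_le0.
by apply: integral_ge0 => x _; rewrite oppe_ge0; exact: phiG_le0.
Qed.
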